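(* Let $G=(V,E)$ be a $3$-regular graph. Then there exists a polynomial $P(\cdot,\cdot)$ in two variables with integer coefficients such that for all $a,b\in\mathbb{C}$, $$\sum_{\sigma:V\to\{0,1\}}\prod_{\{u,v\}\in E} g_{a,b}(\sigma(u),\sigma(v)) = P(ab,\,a^3+b^3),$$ where $g_{a,b}(0,0)=a$, $g_{a,b}(0,1)=g_{a,b}(1,0)=1$, $g_{a,b}(1,1)=b$. *)

(* Defs.v *)
From HB Require Import structures.
From mathcomp Require Import all_boot all_order all_algebra.
From mathcomp Require Import reals.
From mathcomp.real_closed Require Import complex.
Set Implicit Arguments. Unset Strict Implicit. Unset Printing Implicit Defensive.
Import Order.TTheory GRing.Theory Num.Theory.
Local Open Scope ring_scope.

Definition simple_graph (V : finType) (e : rel V) : Prop :=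
  symmetric e /\ irreflexive e.

Definition regular (V : finType) (e : rel V) (d : nat) : Prop :=
  forall v : V, #|[set u | e v u]| = d.

(* Each unordered edge {u,v} is listed once, oriented by enum_rank. *)
Definition edge_pairs (V : finType) (e : rel V) : {set V * V} :=
  [set p : V * V | e p.1 p.2 && (enum_rank p.1 < enum_rank p.2)%N].

(* g_{a,b}(0,0)=a, g(0,1)=g(1,0)=1, g(1,1)=b ; false = 0, true = 1 *)
Definition gab (C : nzRingType) (a b : C) (x y : bool) : C :=
  match x, y with
  | false, false => a
  | true, true => b
  | _, _ => 1
  end.

Definition Zg (C : comNzRingType) (V : finType) (e : rel V) (a b : C) : C :=
  \sum_(sigma : {ffun V -> bool})
     \prod_(p in edge_pairs e) gab a b (sigma p.1) (sigma p.2).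

(* Evaluation of a two-variable integer polynomial P (an element of
   {poly {poly int}}: coefficients in the first variable x, outer variable y)
   at (x, y) in a commutative ring C: P(x,y) = sum_i P_i(x) y^i. *)
Definition eval2 (C : comNzRingType) (P : {poly {poly int}}) (x y : C) : C :=
  \sum_(i < size P) (map_poly intr P`_i).[x] * y ^+ i.

(* Main.v *)
Require Import Defs.
From HB Require Import structures.
From mathcomp Require Import all_boot all_order all_algebra.
From mathcomp Require Import reals.
From mathcomp.real_closed Require Import complex.
From mathcomp Require Import ring zify.
Import Order.TTheory GRing.Theory Num.Theory.
Set Implicit Arguments. Unset Strict Implicit.
Local Open Scope ring_scope.
Local Open Scope nat_scope.
Lemma card_sum (T : finType) (P : pred T) : #|[set x | P x]| = \sum_x (P x : nat).
Proof. by rewrite -sum1_card big_mkcond; apply: eq_bigr => x _; rewrite inE; case: (P x). Qed.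

Definition Ecnt (V : finType) (e : rel V) (s : {ffun V -> bool}) (x : bool) :=
  #|[set p in edge_pairs e | (s p.1 == x) && (s p.2 == x)]|.

Section Comb.
Variables (V : finType) (e : rel V).
Hypothesis esym : symmetric e.
Hypothesis eirr : irreflexive e.
Hypothesis ereg : regular e 3.
Variable s : {ffun V -> bool}.

Definition cnt x y : nat := \sum_v \sum_u ((e v u) && (s v == x) && (s u == y)).

Lemma F1 x : cnt x false + cnt x true = 3 * #|[set v | s v == x]|.
Proof.
rewrite /cnt -big_split /= card_sum big_distrr /=.
apply: eq_bigr => v _.
rewrite -big_split /=.
transitivity (\sum_u ((s v == x) * (e v u : nat))).
  by apply: eq_bigr => u _; case: (e v u); case: (s v == x); case: (s u).
rewrite -big_distrr /= -(@card_sum _ (e v)) ereg.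
by rewrite mulnC.
Qed.

Lemma F2 : cnt false true = cnt true false.
Proof.
rewrite /cnt exchange_big /=; apply: eq_bigr => w _; apply: eq_bigr => z _.
by rewrite (esym z w); case: (e w z); case: (s w); case: (s z).
Qed.

Lemma F3 x : cnt x x = 2 * Ecnt e s x.
Proof.
set G := fun v u => (e v u && (enum_rank v < enum_rank u)%N && (s v == x) && (s u == x) : nat).
have -> : Ecnt e s x = \sum_v \sum_u G v u.
  rewrite /Ecnt card_sum pair_big /=; apply: eq_bigr => p _.
  by rewrite /edge_pairs inE /G !andbA.
have -> : cnt x x = \sum_v \sum_u (G v u + G u v).
  apply: eq_bigr => v _; apply: eq_bigr => u _.
  rewrite /G (esym u v).
  case Evu: (e v u) => //=.
  have hne : enum_rank v != enum_rank u.
    apply/eqP => /enum_rank_inj H; subst u; by rewrite eirr in Evu.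
  rewrite neq_ltn in hne; case/orP: hne => h.
    by rewrite h ltnNge (ltnW h) /=; case: (s v == x); case: (s u == x).
  by rewrite h ltnNge (ltnW h) /=; case: (s v == x); case: (s u == x).
under eq_bigr do rewrite big_split /=.
rewrite big_split /= [X in _ + X = _]exchange_big /=.
by rewrite addnn -mul2n.
Qed.

Lemma main_rel : 2 * Ecnt e s false + 3 * #|[set v | s v == true]| =
                 2 * Ecnt e s true + 3 * #|[set v | s v == false]|.
Proof.
have h1 := F1 false; have h2 := F1 true; have h3 := F2; have h4 := F3 false; have h5 := F3 true.
lia.
Qed.

Lemma div3 : (Ecnt e s true < Ecnt e s false)%N ->
  exists m, Ecnt e s false - Ecnt e s true = 3 * m.
Proof.
move=> lt; have h := main_rel.
have d : 3 %| Ecnt e s false - Ecnt e s true by lia.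
by exists ((Ecnt e s false - Ecnt e s true) %/ 3); rewrite mulnC divnK.
Qed.
End Comb.
Local Open Scope ring_scope.
Section S.
Variable C : comNzRingType.

Definition gev (x : C) : {poly int} -> C := horner_eval x \o map_poly (intr : int -> C).

Lemma eval2E P (x y : C) : eval2 P x y = (map_poly (gev x) P).[y].
Proof.
rewrite (@horner_coef_wide _ (size P)); last exact: size_poly.
by apply: eq_bigr => i _; rewrite coef_map.
Qed.

Definition rep (f : C -> C -> C) :=
  exists P, forall a b, f a b = eval2 P (a * b) (a ^+ 3 + b ^+ 3).

Lemma rep_ext f h : (forall a b, f a b = h a b) -> rep f -> rep h.
Proof. by move=> E [P HP]; exists P => a b; rewrite -E. Qed.
Arguments rep_ext {f h}.

Lemma repD f h : rep f -> rep h -> rep (fun a b => f a b + h a b).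
Proof. by move=> [P HP] [Q HQ]; exists (P + Q) => a b; rewrite HP HQ !eval2E rmorphD hornerD. Qed.
Lemma repB f h : rep f -> rep h -> rep (fun a b => f a b - h a b).
Proof. by move=> [P HP] [Q HQ]; exists (P - Q) => a b; rewrite HP HQ !eval2E rmorphB hornerD hornerN. Qed.
Lemma repM f h : rep f -> rep h -> rep (fun a b => f a b * h a b).
Proof. by move=> [P HP] [Q HQ]; exists (P * Q) => a b; rewrite HP HQ !eval2E rmorphM hornerM. Qed.
Lemma rep1 : rep (fun _ _ => 1).
Proof. by exists 1 => a b; rewrite eval2E rmorph1 hornerC. Qed.
Lemma rep0 : rep (fun _ _ => 0).
Proof. by exists 0 => a b; rewrite eval2E rmorph0 hornerC. Qed.
Lemma repq : rep (fun a b => a * b).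
Proof. exists ('X%:P) => a b; rewrite eval2E map_polyC hornerC /gev /=.
by rewrite horner_evalE map_polyX hornerX. Qed.
Lemma reps : rep (fun a b => a ^+ 3 + b ^+ 3).
Proof. by exists 'X => a b; rewrite eval2E map_polyX hornerX. Qed.
Lemma repX f n : rep f -> rep (fun a b => f a b ^+ n).
Proof. move=> Hf; elim: n => [|n IH]; first exact: rep1.
apply: (@rep_ext (fun a b => f a b * f a b ^+ n)); first by move=> a b; rewrite exprS.
exact: repM. Qed.

Lemma rep_pow m : rep (fun a b => a ^+ (3 * m)%N + b ^+ (3 * m)%N).
Proof.
suff H : forall m, rep (fun a b => a ^+ (3 * m)%N + b ^+ (3 * m)%N) /\
   rep (fun a b => a ^+ (3 * m.+1)%N + b ^+ (3 * m.+1)%N) by case: (H m).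
elim=> [|k [H1 H2]]; first split.
- by exists 2%:R => a b; rewrite !expr0 eval2E rmorphMn rmorph1 hornerMn hornerC.
- by rewrite muln1; apply: reps.
split=> //.
apply: (@rep_ext (fun a b => (a ^+ 3 + b ^+ 3) * (a ^+ (3 * k.+1)%N + b ^+ (3 * k.+1)%N) -
     (a * b) ^+ 3 * (a ^+ (3 * k)%N + b ^+ (3 * k)%N))).
  move=> a b; rewrite !mulnS !exprD exprMn; ring.
apply: repB; apply: repM => //; [exact: reps | exact: repX repq].
Qed.

Lemma rep_sum (I : finType) (Pr : pred I) (F : I -> C -> C -> C) :
  (forall i, rep (F i)) -> rep (fun a b => \sum_(i | Pr i) F i a b).
Proof.
move=> HF; suff H : forall s : seq I, rep (fun a b => \sum_(i <- s | Pr i) F i a b) by apply: H.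
elim=> [|i s IH].
  by apply: (rep_ext _ rep0) => a b; rewrite big_nil.
case E: (Pr i).
  apply: (rep_ext _ (repD (HF i) IH)) => a b; by rewrite big_cons E.
by apply: (rep_ext _ IH) => a b; rewrite big_cons E.
Qed.
End S.
Local Open Scope complex_scope.
Section Main.
Variable C : comNzRingType.
Variables (V : finType) (e : rel V).

Lemma prod_if (A : {set V * V}) (P : pred (V * V)) (a : C) :
  \prod_(p in A) (if P p then a else 1) = a ^+ #|[set p in A | P p]|.
Proof.
rewrite -prodr_const big_mkcond [RHS]big_mkcond /=.
by apply: eq_bigr => p _; rewrite inE; case: (p \in A); case: (P p).
Qed.

Lemma prodE (s : {ffun V -> bool}) (a b : C) :
  \prod_(p in edge_pairs e) gab a b (s p.1) (s p.2) =
  a ^+ Ecnt e s false * b ^+ Ecnt e s true.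
Proof.
rewrite /Ecnt -!prod_if -big_split /=.
by apply: eq_bigr => p _; case: (s p.1); case: (s p.2); rewrite /= ?mulr1 ?mul1r.
Qed.

Definition compl (s : {ffun V -> bool}) : {ffun V -> bool} := [ffun v => ~~ s v].
Lemma complK : involutive compl.
Proof. by move=> s; apply/ffunP => v; rewrite !ffunE negbK. Qed.
Lemma Ecompl s x : Ecnt e (compl s) x = Ecnt e s (~~ x).
Proof.
rewrite /Ecnt; apply: eq_card => p; rewrite !inE !ffunE.
by case: (p \in edge_pairs e); case: x; case: (s p.1); case: (s p.2).
Qed.
End Main.

Theorem lemma4p1 (R : realType) (V : finType) (e : rel V) :
  simple_graph e -> regular e 3 ->
  exists P : {poly {poly int}},
    forall a b : R[i],
      Zg e a b = eval2 P (a * b) (a ^+ 3 + b ^+ 3).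
Proof.
move=> [esym eirr] ereg.
pose E0 s := Ecnt e s false. pose E1 s := Ecnt e s true.
pose T (s : {ffun V -> bool}) (a b : R[i]) :=
  if (E1 s < E0 s)%N then (a * b) ^+ E1 s * (a ^+ (E0 s - E1 s) + b ^+ (E0 s - E1 s))
  else if E0 s == E1 s then (a * b) ^+ E0 s else 0.
have HT : rep (fun a b => \sum_(s : {ffun V -> bool}) T s a b).
  apply: rep_sum => s; rewrite /T.
  case H1: (E1 s < E0 s)%N.
    have [m Hm] := div3 esym eirr ereg H1.
    have HR : rep (fun a b : R[i] => (a * b) ^+ E1 s * (a ^+ (3 * m)%N + b ^+ (3 * m)%N)).
      exact: (repM (repX (E1 s) (@repq _)) (@rep_pow _ m)).
    apply: (rep_ext _ HR) => a b /=.
    by rewrite /E0 /E1 Hm.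
  case H2: (E0 s == E1 s); first exact: repX _ (@repq _).
  exact: rep0.
case: HT => P HP; exists P => a b; rewrite -HP /Zg.
under eq_bigr do rewrite prodE.
rewrite [LHS](_ : _ = \sum_s ((if (E1 s < E0 s)%N then a ^+ E0 s * b ^+ E1 s else 0)
   + (if E0 s == E1 s then a ^+ E0 s * b ^+ E1 s else 0)
   + (if (E0 s < E1 s)%N then a ^+ E0 s * b ^+ E1 s else 0))); last first.
  apply: eq_bigr => s _.
  by case: ltngtP => _; rewrite ?addr0 ?add0r.
rewrite big_split /= [X in _ + X](reindex_inj (inv_inj (@complK V))) /= -big_split /=.
apply: eq_bigr => s _; rewrite /T /E0 /E1 !Ecompl /=.
case: ltngtP => h.
- move: (Ecnt e s false - Ecnt e s true)%N (subnKC (ltnW h)) => d <-.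
  rewrite !exprD exprMn; ring.
- by rewrite !addr0.
- by rewrite h add0r addr0 exprMn.
Qed.
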